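(* Let $\ell \geq 3$ be an integer. Let $A=(a_{ij})_{1\le i\le \ell,\,1\le j\le 2}$ and $B=(b_{ij})_{1\le i\le \ell,\,1\le j\le 2}$ be $\ell\times 2$ real matrices all of whose entries are non-zero, with $\operatorname{rank} A = \operatorname{rank} B = 2$. Then there exist proper algebraic subsets $\Sigma_A, \Sigma_B \subset (\mathbb{R}^2)^\ell$ such that for every $p\in (\mathbb{R}^2)^\ell\setminus \Sigma_A$ and every $q\in(\mathbb{R}^2)^\ell\setminus\Sigma_B$, the mapping $G_{(p,A)}$ is $\mathcal{A}$-equivalent to the mapping $G_{(q,B)}$.
   Context: For a point $p=(p_1,\dots,p_\ell)\in(\mathbb{R}^2)^\ell$ with $p_i=(p_{i1},p_{i2})$ and an $\ell\times 2$ matrix $A=(a_{ij})$ with non-zero entries, the generalized distance-squared mapping $G_{(p,A)}:\mathbb{R}^2\to\mathbb{R}^\ell$ is $G_{(p,A)}(x_1,x_2)=\big(\sum_{j=1}^2 a_{1j}(x_j-p_{1j})^2,\ \dots,\ \sum_{j=1}^2 a_{\ell j}(x_j-p_{\ell j})^2\big)$. Two smooth maps $f,g:\mathbb{R}^2\to\mathbb{R}^\ell$ are $\mathcal{A}$-equivalent if there are ($C^\infty$) diffeomorphisms $h:\mathbb{R}^2\to\mathbb{R}^2$ and $H:\mathbb{R}^\ell\to\mathbb{R}^\ell$ with $f=H\circ g\circ h^{-1}$. *)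

(* Defs.v *)
From Stdlib Require Import Reals List.
Open Scope R_scope.

Definition Idx (n : nat) : Type := { i : nat | (i < n)%nat }.
Definition Vec (n : nat) : Type := Idx n -> R.

Definition j0 : Idx 2 := exist _ 0%nat (le_S _ _ (le_n 1)).
Definition j1 : Idx 2 := exist _ 1%nat (le_n 2).

Definition shift {n : nat} (x : Vec n) (i : Idx n) (t : R) : Vec n :=
  fun k => if Nat.eq_dec (proj1_sig k) (proj1_sig i) then x k + t else x k.

(** Continuity of f : R^n -> R (sup-norm, equivalent to Euclidean). *)
Definition cont {n : nat} (f : Vec n -> R) : Prop :=
  forall (x : Vec n) (eps : R), 0 < eps ->
    exists delta, 0 < delta /\
      forall y : Vec n, (forall k, Rabs (y k - x k) < delta) ->
        Rabs (f y - f x) < eps.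

Definition partial_lim {n : nat} (f : Vec n -> R) (i : Idx n) (x : Vec n) (l : R) : Prop :=
  derivable_pt_lim (fun t => f (shift x i t)) 0 l.

Inductive Ck {n : nat} : nat -> (Vec n -> R) -> Prop :=
| Ck_0 : forall f, cont f -> Ck 0 f
| Ck_S : forall k f, cont f ->
    (forall i : Idx n, exists g : Vec n -> R,
        (forall x, partial_lim f i x (g x)) /\ Ck k g) ->
    Ck (S k) f.

Definition smooth_fun {n : nat} (f : Vec n -> R) : Prop := forall k, Ck k f.
Definition smooth {n m : nat} (F : Vec n -> Vec m) : Prop :=
  forall i : Idx m, smooth_fun (fun x => F x i).

Definition diffeo_with_inverse {n : nat} (h hinv : Vec n -> Vec n) : Prop :=
  smooth h /\ smooth hinv /\ (forall x, h (hinv x) = x) /\ (forall x, hinv (h x) = x).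

Definition A_equivalent {n m : nat} (f g : Vec n -> Vec m) : Prop :=
  exists (h hinv : Vec n -> Vec n) (H Hinv : Vec m -> Vec m),
    diffeo_with_inverse h hinv /\ diffeo_with_inverse H Hinv /\
    forall x, f x = H (g (hinv x)).

Definition G {l : nat} (p : Idx l -> Vec 2) (A : Idx l -> Idx 2 -> R) : Vec 2 -> Vec l :=
  fun x i => A i j0 * (x j0 - p i j0) ^ 2 + A i j1 * (x j1 - p i j1) ^ 2.

(** rank A = 2 for an l x 2 matrix: its two columns are linearly independent. *)
Definition rank2 {l : nat} (A : Idx l -> Idx 2 -> R) : Prop :=
  forall c0 c1 : R, (forall i, c0 * A i j0 + c1 * A i j1 = 0) -> c0 = 0 /\ c1 = 0.

Inductive poly (V : Type) : Type :=
| PVar : V -> poly V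
| PConst : R -> poly V
| PAdd : poly V -> poly V -> poly V
| PMul : poly V -> poly V -> poly V.
Arguments PVar {V}. Arguments PConst {V}. Arguments PAdd {V}. Arguments PMul {V}.

Fixpoint peval {V : Type} (e : V -> R) (P : poly V) : R :=
  match P with
  | PVar v => e v
  | PConst c => c
  | PAdd P Q => peval e P + peval e Q
  | PMul P Q => peval e P * peval e Q
  end.

Definition algebraic_subset {l : nat} (S : (Idx l -> Vec 2) -> Prop) : Prop :=
  exists Ps : list (poly (Idx l * Idx 2)),
    forall p, S p <-> Forall (fun P => peval (fun v => p (fst v) (snd v)) P = 0) Ps.

Definition proper_algebraic_subset {l : nat} (S : (Idx l -> Vec 2) -> Prop) : Prop :=
  algebraic_subset S /\ exists p, ~ S p.

(* Main.v *)
Require Import Defs.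
From Stdlib Require Import Reals Lra.
From Stdlib Require Import Arith.Peano_dec FunctionalExtensionality.
Open Scope R_scope.

Lemma cont_const n (c : R) : @cont n (fun _ => c).
Proof. intros x eps he; exists 1; split; [lra|]; intros; rewrite Rminus_diag, Rabs_R0; lra. Qed.

Lemma cont_coord n (j : Idx n) : @cont n (fun y => y j).
Proof. intros x eps he; exists eps; split; [lra|]; intros y Hy; apply Hy. Qed.

Lemma cont_plus n (f g : Vec n -> R) : cont f -> cont g -> cont (fun y => f y + g y).
Proof.
  intros Hf Hg x eps he.
  destruct (Hf x (eps/2)) as [d1 [Hd1 H1]]; [lra|].
  destruct (Hg x (eps/2)) as [d2 [Hd2 H2]]; [lra|].
  exists (Rmin d1 d2); split; [apply Rmin_pos; auto|].
  intros y Hy.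
  assert (A1 : Rabs (f y - f x) < eps/2) by (apply H1; intro k; specialize (Hy k); pose proof (Rmin_l d1 d2); lra).
  assert (A2 : Rabs (g y - g x) < eps/2) by (apply H2; intro k; specialize (Hy k); pose proof (Rmin_r d1 d2); lra).
  replace (f y + g y - (f x + g x)) with ((f y - f x) + (g y - g x)) by ring.
  pose proof (Rabs_triang (f y - f x) (g y - g x)); lra.
Qed.

Lemma cont_scal n (c : R) (f : Vec n -> R) : cont f -> cont (fun y => c * f y).
Proof.
  intros Hf x eps he.
  destruct (Req_dec c 0) as [->|Hc].
  - exists 1; split; [lra|]; intros; rewrite !Rmult_0_l, Rminus_diag, Rabs_R0; lra.
  - assert (Hc' : 0 < Rabs c) by (apply Rabs_pos_lt; auto).
    destruct (Hf x (eps / Rabs c)) as [d [Hd H]]; [apply Rdiv_lt_0_compat; auto|].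
    exists d; split; auto; intros y Hy.
    replace (c * f y - c * f x) with (c * (f y - f x)) by ring.
    rewrite Rabs_mult.
    specialize (H y Hy).
    apply Rmult_lt_compat_l with (r := Rabs c) in H; auto.
    replace (Rabs c * (eps / Rabs c)) with eps in H by (field; lra). exact H.
Qed.

Lemma Ck_const n k (c : R) : Ck (n:=n) k (fun _ => c).
Proof.
  revert c; induction k; intro c.
  - constructor; apply cont_const.
  - constructor; [apply cont_const|]. intro i. exists (fun _ => 0). split; auto.
    intro x; unfold partial_lim; apply derivable_pt_lim_const.
Qed.

Lemma Ck_coord n k (j : Idx n) : Ck k (fun y : Vec n => y j).
Proof.
  destruct k.
  - constructor; apply cont_coord.
  - constructor; [apply cont_coord|]. intro i.
    exists (fun _ => if Nat.eq_dec (proj1_sig j) (proj1_sig i) then 1 else 0).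
    split; [|apply Ck_const].
    intro x; unfold partial_lim, shift.
    destruct (Nat.eq_dec (proj1_sig j) (proj1_sig i)).
    + replace 1 with (0 + 1) by ring. apply derivable_pt_lim_plus.
      apply derivable_pt_lim_const. apply derivable_pt_lim_id.
    + apply derivable_pt_lim_const.
Qed.

Lemma Ck_plus n k (f g : Vec n -> R) : Ck k f -> Ck k g -> Ck k (fun y => f y + g y).
Proof.
  revert f g; induction k; intros f g Hf Hg.
  - inversion Hf; inversion Hg; subst. constructor; apply cont_plus; auto.
  - inversion Hf as [|? ? Cf Df]; inversion Hg as [|? ? Cg Dg]; subst.
    constructor; [apply cont_plus; auto|]. intro i.
    destruct (Df i) as [f' [Hf' Cf']]; destruct (Dg i) as [g' [Hg' Cg']].
    exists (fun y => f' y + g' y); split; [|apply IHk; auto].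
    intro x; unfold partial_lim.
    apply (derivable_pt_lim_plus (fun t => f (shift x i t)) (fun t => g (shift x i t))); [apply Hf'|apply Hg'].
Qed.

Lemma Ck_scal n k (c : R) (f : Vec n -> R) : Ck k f -> Ck k (fun y => c * f y).
Proof.
  revert f; induction k; intros f Hf.
  - inversion Hf; subst. constructor; apply cont_scal; auto.
  - inversion Hf as [|? ? Cf Df]; subst.
    constructor; [apply cont_scal; auto|]. intro i.
    destruct (Df i) as [f' [Hf' Cf']].
    exists (fun y => c * f' y); split; [|apply IHk; auto].
    intro x; unfold partial_lim.
    apply (derivable_pt_lim_scal (fun t => f (shift x i t))); apply Hf'.
Qed.

Lemma rank2_row l (A : Idx l -> Idx 2 -> R) (i0 : Idx l) :
  (forall i j, A i j <> 0) -> rank2 A ->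
  exists i, A i0 j0 * A i j1 - A i0 j1 * A i j0 <> 0.
Proof.
  intros hA rA.
  destruct (Classical_Prop.classic (exists i, A i0 j0 * A i j1 - A i0 j1 * A i j0 <> 0)) as [H|H]; auto.
  exfalso.
  destruct (rA (A i0 j1) (- A i0 j0)) as [_ H2].
  - intro i. destruct (Req_dec (A i0 j0 * A i j1 - A i0 j1 * A i j0) 0) as [E|E].
    + replace (A i0 j1 * A i j0 + - A i0 j0 * A i j1) with (- (A i0 j0 * A i j1 - A i0 j1 * A i j0)) by ring.
      rewrite E; ring.
    + exfalso; apply H; exists i; auto.
  - apply (hA i0 j0); lra.
Qed.

From Stdlib Require Import Lia.
Lemma fresh_nat (u v w : nat) : exists k, (k < 4)%nat /\ k <> u /\ k <> v /\ k <> w.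
Proof.
  destruct (Classical_Prop.classic (exists k, (k < 4)%nat /\ k <> u /\ k <> v /\ k <> w)) as [H|H]; auto.
  exfalso.
  assert (F : forall k, (k < 4)%nat -> k = u \/ k = v \/ k = w).
  { intros k hk. destruct (Nat.eq_dec k u); auto. destruct (Nat.eq_dec k v); auto.
    destruct (Nat.eq_dec k w); auto. exfalso; apply H; exists k; auto. }
  pose proof (F 0%nat ltac:(lia)); pose proof (F 1%nat ltac:(lia));
  pose proof (F 2%nat ltac:(lia)); pose proof (F 3%nat ltac:(lia)). lia.
Qed.

From Stdlib Require Import Arith.Peano_dec FunctionalExtensionality.
Set Warnings "-notation-overridden -ambiguous-paths".
From mathcomp Require Import all_boot all_algebra.
From mathcomp Require Import fingroup perm.
From mathcomp Require Import Rstruct.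
From mathcomp Require Import ring lra zify.
Import GRing.Theory Num.Theory.
Local Open Scope ring_scope.

Definition toI {n} (i : Idx n) : 'I_n := Ordinal (introT ltP (proj2_sig i)).
Definition ofI {n} (i : 'I_n) : Idx n := exist _ (val i) (elimT ltP (ltn_ord i)).

Lemma ofI_toI n (i : Idx n) : ofI (toI i) = i.
Proof. case: i => [m Hm]; rewrite /ofI /toI /=. congr exist; apply: le_unique. Qed.
Lemma toI_ofI n (i : 'I_n) : toI (ofI i) = i.
Proof. by apply: val_inj. Qed.

Definition vc {n} (y : Vec n) : 'cV[R]_n := \col_i y (ofI i).
Definition uv {n} (v : 'cV[R]_n) : Vec n := fun i => v (toI i) 0.

Lemma uv_vc n (y : Vec n) : uv (vc y) = y.
Proof. apply: functional_extensionality => i; by rewrite /uv /vc mxE ofI_toI. Qed.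
Lemma vc_uv n (v : 'cV[R]_n) : vc (uv v) = v.
Proof. apply/matrixP => i j; by rewrite /uv /vc mxE toI_ofI (ord1 j). Qed.

Definition aff {n} (T : 'M[R]_n) (c : 'cV[R]_n) (y : Vec n) : Vec n := uv (c + T *m vc y).

Lemma aff_comp n (T T' : 'M[R]_n) c c' y :
  aff T c (aff T' c' y) = aff (T *m T') (c + T *m c') y.
Proof. by rewrite /aff vc_uv mulmxDr mulmxA addrA. Qed.
Lemma aff_id n (y : Vec n) : aff 1 0 y = y.
Proof. by rewrite /aff mul1mx add0r uv_vc. Qed.

Lemma Ck_sum n k (F : 'I_n -> R) (s : seq 'I_n) :
  Ck k (fun y : Vec n => \sum_(j <- s) F j * y (ofI j)).
Proof.
  elim: s => [|a s IH].
  - have -> : (fun y : Vec n => \sum_(j <- [::]) F j * y (ofI j)) = (fun _ => 0%R).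
      by apply: functional_extensionality => y; rewrite big_nil.
    exact: Ck_const.
  - have -> : (fun y : Vec n => \sum_(j <- a :: s) F j * y (ofI j)) =
              (fun y => Rplus (Rmult (F a) (y (ofI a))) (\sum_(j <- s) F j * y (ofI j))).
      by apply: functional_extensionality => y; rewrite big_cons.
    apply: Ck_plus => //. apply: Ck_scal. exact: Ck_coord.
Qed.

Lemma smooth_aff n (T : 'M[R]_n) c : smooth (aff T c).
Proof.
  move=> i k.
  have -> : (fun x => aff T c x i) =
     (fun y => Rplus (c (toI i) 0) (\sum_(j <- index_enum 'I_n) T (toI i) j * y (ofI j))).
    apply: functional_extensionality => y; rewrite /aff /uv !mxE.
    congr (_ + _); apply: eq_bigr => j _; by rewrite mxE.
  apply: Ck_plus; [exact: Ck_const | exact: Ck_sum].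
Qed.

Lemma affeq_A n m (f g : Vec n -> Vec m) T S c U V e :
  S *m T = 1 -> T *m S = 1 -> V *m U = 1 -> U *m V = 1 ->
  (forall x, f x = aff T c (g (aff U e x))) -> A_equivalent f g.
Proof.
  move=> ST TS VU UV H.
  exists (aff V (- (V *m e))), (aff U e), (aff T c), (aff S (- (S *m c))).
  split; [|split].
  - split; [exact: smooth_aff|split; [exact: smooth_aff|split]] => x.
    + by rewrite aff_comp VU addNr aff_id.
    + by rewrite aff_comp UV mulmxN mulmxA UV mul1mx addrN aff_id.
  - split; [exact: smooth_aff|split; [exact: smooth_aff|split]] => x.
    + by rewrite aff_comp mulmxN mulmxA TS mul1mx addrN aff_id.
    + by rewrite aff_comp ST addNr aff_id.
  - exact: H.
Qed.

Definition AffEq {n m} (f g : Vec n -> Vec m) : Prop :=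
  exists (T S : 'M[R]_m) c (U V : 'M[R]_n) e,
    S *m T = 1 /\ T *m S = 1 /\ V *m U = 1 /\ U *m V = 1 /\
    forall x, f x = aff T c (g (aff U e x)).

Lemma AffEq_A n m (f g : Vec n -> Vec m) : AffEq f g -> A_equivalent f g.
Proof. case=> [T [S [c [U [V [e [h1 [h2 [h3 [h4 H]]]]]]]]]]; exact: affeq_A h1 h2 h3 h4 H. Qed.

Lemma AffEq_sym n m (f g : Vec n -> Vec m) : AffEq f g -> AffEq g f.
Proof.
  case=> [T [S [c [U [V [e [h1 [h2 [h3 [h4 H]]]]]]]]]].
  exists S, T, (- (S *m c)), V, U, (- (V *m e)); do 4 split => //.
  move=> y. rewrite H (aff_comp _ U V) mulmxN mulmxA h4 mul1mx addrN aff_id.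
  by rewrite aff_comp h1 addNr aff_id.
Qed.

Lemma AffEq_trans n m (f g h : Vec n -> Vec m) : AffEq f g -> AffEq g h -> AffEq f h.
Proof.
  case=> [T [S [c [U [V [e [h1 [h2 [h3 [h4 H]]]]]]]]]].
  case=> [T' [S' [c' [U' [V' [e' [h1' [h2' [h3' [h4' H']]]]]]]]]].
  exists (T *m T'), (S' *m S), (c + T *m c'), (U' *m U), (V *m V'), (e' + U' *m e).
  split; [by rewrite mulmxA -(mulmxA S') h1 mulmx1 h1'|].
  split; [by rewrite mulmxA -(mulmxA T) h2' mulmx1 h2|].
  split; [by rewrite mulmxA -(mulmxA V) h3' mulmx1 h3|].
  split; [by rewrite mulmxA -(mulmxA U') h4 mulmx1 h4'|].
  move=> x. by rewrite H H' aff_comp aff_comp.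
Qed.

Lemma AffEq_of n m (f g : Vec n -> Vec m) T S c U V e :
  S *m T = 1 -> T *m S = 1 -> V *m U = 1 -> U *m V = 1 ->
  (forall z, f (aff U e z) = aff T c (g z)) -> AffEq f g.
Proof.
  move=> h1 h2 h3 h4 H.
  exists T, S, c, V, U, (- (V *m e)); do 4 split => //.
  move=> x. rewrite -H. by rewrite aff_comp mulmxN mulmxA h4 mul1mx addrN aff_id.
Qed.

Lemma mx_inord n (M : 'M[R]_n.+1) : M = \matrix_(i, j) M (inord i) (inord j).
Proof. apply/matrixP => i j; by rewrite mxE !inord_val. Qed.

Lemma det2f (f : nat -> nat -> R) : \det (\matrix_(i < 2, j < 2) f i j) = f 0%N 0%N * f 1%N 1%N - f 0%N 1%N * f 1%N 0%N.
Proof.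
  rewrite (expand_det_row _ 0) !big_ord_recl big_ord0 /cofactor !det_mx11 !mxE /=.
  ring.
Qed.
Lemma det2 (M : 'M[R]_2) : \det M = M (inord 0) (inord 0) * M (inord 1) (inord 1) - M (inord 0) (inord 1) * M (inord 1) (inord 0).
Proof. rewrite {1}[M]mx_inord; exact: (det2f (fun a b => M (inord a) (inord b))). Qed.

Lemma det3f (f : nat -> nat -> R) : \det (\matrix_(i < 3, j < 3) f i j) =
  f 0%N 0%N * (f 1%N 1%N * f 2%N 2%N - f 1%N 2%N * f 2%N 1%N)
  - f 0%N 1%N * (f 1%N 0%N * f 2%N 2%N - f 1%N 2%N * f 2%N 0%N)
  + f 0%N 2%N * (f 1%N 0%N * f 2%N 1%N - f 1%N 1%N * f 2%N 0%N).
Proof.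
  rewrite (expand_det_row _ 0) !big_ord_recl big_ord0 /cofactor !det2 !mxE /= !inordK //=.
  ring.
Qed.
Lemma det3 (M : 'M[R]_3) : \det M = 
  M (inord 0) (inord 0) * (M (inord 1) (inord 1) * M (inord 2) (inord 2) - M (inord 1) (inord 2) * M (inord 2) (inord 1))
  - M (inord 0) (inord 1) * (M (inord 1) (inord 0) * M (inord 2) (inord 2) - M (inord 1) (inord 2) * M (inord 2) (inord 0))
  + M (inord 0) (inord 2) * (M (inord 1) (inord 0) * M (inord 2) (inord 1) - M (inord 1) (inord 1) * M (inord 2) (inord 0)).
Proof. rewrite {1}[M]mx_inord; exact: (det3f (fun a b => M (inord a) (inord b))). Qed.

Definition det3e (f : nat -> nat -> R) :=
  f 0%N 0%N * (f 1%N 1%N * f 2%N 2%N - f 1%N 2%N * f 2%N 1%N)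
  - f 0%N 1%N * (f 1%N 0%N * f 2%N 2%N - f 1%N 2%N * f 2%N 0%N)
  + f 0%N 2%N * (f 1%N 0%N * f 2%N 1%N - f 1%N 1%N * f 2%N 0%N).

Definition det4e (f : nat -> nat -> R) :=
  f 0%N 0%N * det3e (fun i j => f i.+1 (bump 0 j))
  - f 0%N 1%N * det3e (fun i j => f i.+1 (bump 1 j))
  + f 0%N 2%N * det3e (fun i j => f i.+1 (bump 2 j))
  - f 0%N 3%N * det3e (fun i j => f i.+1 (bump 3 j)).

Lemma det4f (f : nat -> nat -> R) : \det (\matrix_(i < 4, j < 4) f i j) = det4e f.
Proof.
  rewrite (expand_det_row _ 0) !big_ord_recl big_ord0 /cofactor !det3 !mxE /= !inordK //=.
  rewrite /det4e /det3e /bump /=.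
  ring.
Qed.

Definition kent {l} (p : Idx l -> Vec 2) (A : Idx l -> Idx 2 -> R) (i : Idx l) (k : nat) : R :=
  nth 0 [:: A i j0; A i j1; -2 * A i j0 * p i j0; -2 * A i j1 * p i j1] k.
Definition Kmat {l} p A : 'M[R]_(l, 4) := \matrix_(i, k) kent p A (ofI i) k.
Definition cst {l} (p : Idx l -> Vec 2) (A : Idx l -> Idx 2 -> R) : 'cV[R]_l :=
  \col_i (A (ofI i) j0 * p (ofI i) j0 ^+ 2 + A (ofI i) j1 * p (ofI i) j1 ^+ 2).
Definition Phi (x : Vec 2) : 'cV[R]_4 := \col_k nth 0 [:: x j0 ^+ 2; x j1 ^+ 2; x j0; x j1] k.

Lemma G_mat l (p : Idx l -> Vec 2) A x : G p A x = uv (Kmat p A *m Phi x + cst p A).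
Proof.
  apply: functional_extensionality => i.
  rewrite /G /uv !mxE !big_ord_recl big_ord0 !mxE /= /kent /= ofI_toI.
  rewrite ?RminusE ?RplusE ?RmultE. have E1 : IZR 1 = 1 by []. rewrite E1 !mulr1. ring.
Qed.

Definition PolyF {l} (f : (Idx l -> Vec 2) -> R) : Prop :=
  exists P : Defs.poly (Idx l * Idx 2)%type, forall p, peval (fun v => p (fst v) (snd v)) P = f p.

Lemma PolyF_const l (c : R) : PolyF (l:=l) (fun _ => c).
Proof. by exists (PConst c). Qed.
Lemma PolyF_var l i j : PolyF (l:=l) (fun p => p i j).
Proof. by exists (PVar (i, j)). Qed.
Lemma PolyF_add l f g : PolyF (l:=l) f -> PolyF g -> PolyF (fun p => f p + g p).
Proof. case=> P HP [Q HQ]; exists (PAdd P Q) => p /=. by rewrite HP HQ. Qed.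
Lemma PolyF_mul l f g : PolyF (l:=l) f -> PolyF g -> PolyF (fun p => f p * g p).
Proof. case=> P HP [Q HQ]; exists (PMul P Q) => p /=. by rewrite HP HQ. Qed.
Lemma PolyF_ext l f g : (forall p, f p = g p) -> PolyF (l:=l) f -> PolyF g.
Proof. move=> E [P HP]; exists P => p; by rewrite HP E. Qed.
Lemma PolyF_opp l f : PolyF (l:=l) f -> PolyF (fun p => - f p).
Proof. move=> H. apply: (@PolyF_ext _ (fun p => (-1) * f p)) => [p|]; first by rewrite mulN1r.
  apply: PolyF_mul => //; exact: PolyF_const. Qed.
Lemma PolyF_sub l f g : PolyF (l:=l) f -> PolyF g -> PolyF (fun p => f p - g p).
Proof. move=> Hf Hg; apply: PolyF_add => //; exact: PolyF_opp. Qed.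

Lemma PolyF_sum l (I : Type) (s : seq I) (F : I -> (Idx l -> Vec 2) -> R) :
  (forall i, PolyF (F i)) -> PolyF (fun p => \sum_(i <- s) F i p).
Proof.
  move=> H; elim: s => [|a s IH].
  - apply: (@PolyF_ext _ (fun _ => 0)) => [p|]; [by rewrite big_nil | exact: PolyF_const].
  - apply: (@PolyF_ext _ (fun p => F a p + \sum_(i <- s) F i p)) => [p|]; first by rewrite big_cons.
    exact: PolyF_add.
Qed.
Lemma PolyF_prod l (I : Type) (s : seq I) (F : I -> (Idx l -> Vec 2) -> R) :
  (forall i, PolyF (F i)) -> PolyF (fun p => \prod_(i <- s) F i p).
Proof.
  move=> H; elim: s => [|a s IH].
  - apply: (@PolyF_ext _ (fun _ => 1)) => [p|]; [by rewrite big_nil | exact: PolyF_const].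
  - apply: (@PolyF_ext _ (fun p => F a p * \prod_(i <- s) F i p)) => [p|]; first by rewrite big_cons.
    exact: PolyF_mul.
Qed.

Lemma PolyF_det l n (M : (Idx l -> Vec 2) -> 'M[R]_n) :
  (forall i j, PolyF (fun p => M p i j)) -> PolyF (fun p => \det (M p)).
Proof.
  move=> H.
  apply: (@PolyF_ext _ (fun p => \sum_(s <- index_enum {perm 'I_n}) (-1) ^+ s * \prod_i M p i (s i))).
    by move=> p; rewrite [RHS]/determinant.
  apply: (@PolyF_sum _ _ _ (fun (s : {perm 'I_n}) p => (-1) ^+ s * \prod_i M p i (s i))) => s.
  apply: PolyF_mul; first exact: PolyF_const.
  apply: (@PolyF_prod _ _ _ (fun i p => M p i (s i))) => i. exact: H.
Qed.

Lemma PolyF_Kmat l (A : Idx l -> Idx 2 -> R) i k : PolyF (fun p => Kmat p A i k).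
Proof.
  case: k => [[|[|[|[|k]]]] Hk]; rewrite /Kmat /kent;
   (apply: PolyF_ext; [move=> p; rewrite mxE /=; reflexivity|]) => /=.
  - exact: PolyF_const.
  - exact: PolyF_const.
  - apply: PolyF_mul; [exact: PolyF_const|exact: PolyF_var].
  - apply: PolyF_mul; [exact: PolyF_const|exact: PolyF_var].
  - exact: PolyF_const.
Qed.

Lemma PolyF_algebraic l (f : (Idx l -> Vec 2) -> R) :
  PolyF f -> algebraic_subset (fun p => f p = 0).
Proof.
  case=> P HP; exists [:: P] => p; split.
  - move=> H; constructor; [by rewrite HP|constructor].
  - move=> H; inversion H; by rewrite -HP.
Qed.

Lemma IZR2 : IZR 2 = 2. Proof. by rewrite IZRposE /= -INRE. Qed.
Lemma IZR4 : IZR 4 = 4. Proof. by rewrite IZRposE /= -INRE. Qed.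
Lemma IZRm2 : IZR (-2) = -2. Proof. rewrite -IZR2; by []. Qed.
Ltac normR := rewrite ?RdivE ?RmultE ?RplusE ?RminusE ?RoppE ?RinvE ?R1E ?R0E ?IZR2 ?IZR4 ?IZRm2.

Lemma ofI0 : ofI (0 : 'I_2) = j0. Proof. rewrite /ofI /j0; congr exist; apply: le_unique. Qed.
Lemma ofI1 : ofI (1 : 'I_2) = j1. Proof. rewrite /ofI /j1; congr exist; apply: le_unique. Qed.

Lemma aff_app n (T : 'M[R]_n) c y i :
  aff T c y i = c (toI i) 0 + \sum_j T (toI i) j * y (ofI j).
Proof. rewrite /aff /uv !mxE; congr (_ + _); apply: eq_bigr => j _; by rewrite mxE. Qed.

Definition diag2 (d0 d1 : R) : 'M[R]_2 := \matrix_(i, j) if (val i == val j) then nth 0 [:: d0; d1] i else 0.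
Definition col2 (e0 e1 : R) : 'cV[R]_2 := \col_i nth 0 [:: e0; e1] i.

Lemma aff_diag2_0 d0 d1 e0 e1 z : aff (diag2 d0 d1) (col2 e0 e1) z j0 = e0 + d0 * z j0.
Proof.
  rewrite aff_app !big_ord_recl big_ord0 !mxE /= ofI0.
  have -> : ofI (lift ord0 (ord0 : 'I_1)) = j1 by rewrite -ofI1; congr ofI; apply: val_inj.
  ring.
Qed.
Lemma aff_diag2_1 d0 d1 e0 e1 z : aff (diag2 d0 d1) (col2 e0 e1) z j1 = e1 + d1 * z j1.
Proof.
  rewrite aff_app !big_ord_recl big_ord0 !mxE /= ofI0.
  have -> : ofI (lift ord0 (ord0 : 'I_1)) = j1 by rewrite -ofI1; congr ofI; apply: val_inj.
  ring.
Qed.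

Lemma diag2_mul d0 d1 : d0 != 0 -> d1 != 0 -> diag2 d0^-1 d1^-1 *m diag2 d0 d1 = 1.
Proof.
  move=> h0 h1; apply/matrixP => i j.
  rewrite !mxE !big_ord_recl big_ord0 !mxE /=.
  case: i => [[|[|i]] Hi] //; case: j => [[|[|j]] Hj] //=; rewrite ?mulVf ?mulfV //; ring.
Qed.
Lemma diag2_mul' d0 d1 : d0 != 0 -> d1 != 0 -> diag2 d0 d1 *m diag2 d0^-1 d1^-1 = 1.
Proof.
  move=> h0 h1; apply/matrixP => i j.
  rewrite !mxE !big_ord_recl big_ord0 !mxE /=.
  case: i => [[|[|i]] Hi] //; case: j => [[|[|j]] Hj] //=; rewrite ?mulVf ?mulfV //; ring.
Qed.

Section L3.
Variables (p : Idx 3 -> Vec 2) (A : Idx 3 -> Idx 2 -> R).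

Definition ent (r k : nat) := kent p A (ofI (inord r : 'I_3)) k.
Definition Dc (c1 c2 c3 : nat) := det3e (fun i j => ent i (nth 0%N [:: c1; c2; c3] j)).
Definition v1 := Dc 1 2 3.
Definition v2 := - Dc 0 2 3.
Definition v3 := Dc 0 1 3.
Definition v4 := - Dc 0 1 2.

Lemma kernel3 (r : 'I_3) :
  kent p A (ofI r) 0 * v1 + kent p A (ofI r) 1 * v2 + kent p A (ofI r) 2 * v3 + kent p A (ofI r) 3 * v4 = 0.
Proof.
  case: r => [[|[|[|m]]] Hm] //.
  - have -> : Ordinal Hm = inord 0 by apply: val_inj; rewrite /= inordK.
    rewrite /v1 /v2 /v3 /v4 /Dc /det3e /ent /=. ring.
  - have -> : Ordinal Hm = inord 1 by apply: val_inj; rewrite /= inordK.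
    rewrite /v1 /v2 /v3 /v4 /Dc /det3e /ent /=. ring.
  - have -> : Ordinal Hm = inord 2 by apply: val_inj; rewrite /= inordK.
    rewrite /v1 /v2 /v3 /v4 /Dc /det3e /ent /=. ring.
Qed.


Definition T3 : 'M[R]_3 := \matrix_(i, j) nth 0 [:: v3 ^+ 2 * kent p A (ofI i) 0; v4 ^+ 2 * kent p A (ofI i) 1;
   v3 * kent p A (ofI i) 2 + v1 * kent p A (ofI i) 0] j.
Definition c3 : 'cV[R]_3 := \col_i (let a := A (ofI i) j0 in let b := A (ofI i) j1 in
   let u := p (ofI i) j0 in let w := p (ofI i) j1 in
   a * u ^+ 2 + b * w ^+ 2 - a * v1 ^+ 2 / (4 * v3 ^+ 2) - b * v2 ^+ 2 / (4 * v4 ^+ 2)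
   + (v3 * (-2 * a * u) + v1 * a) * (v1 / (2 * v3 ^+ 2) - v2 / (2 * v4 ^+ 2))).
Definition U3 := diag2 v3 (- v4).
Definition e3 := col2 (v1 / (2 * v3)) (v2 / (2 * v4)).
Definition N3 (z : Vec 2) : Vec 3 := uv (\col_k nth 0 [:: z j0 ^+ 2; z j1 ^+ 2; z j0 + z j1] k).

Lemma main3 (hA : forall i j, A i j <> 0) : v3 != 0 -> v4 != 0 ->
  forall z, G p A (aff U3 e3 z) = aff T3 c3 (N3 z).
Proof.
  move=> h3 h4 z; apply: functional_extensionality => i.
  rewrite aff_app /G /U3 /e3 aff_diag2_0 aff_diag2_1.
  rewrite !big_ord_recl big_ord0 /N3 /uv !mxE /= !ofI_toI.
  have K := kernel3 (toI i); rewrite ofI_toI /kent /= in K.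
  have ha : A i j0 != 0 by apply/eqP; apply: hA.
  have Ev1 : v1 = - (A i j1 * v2 + -2 * A i j1 * p i j1 * v4 + -2 * A i j0 * p i j0 * v3) / A i j0.
    apply: (mulIf ha). rewrite mulNr divfK //. apply/eqP; rewrite -subr_eq0; apply/eqP. rewrite -K. ring.
  rewrite /kent /=. normR. rewrite !mulr1.
  rewrite Ev1. field. by apply/and3P; split => //; exact: h4.
Qed.

Lemma detT3 : \det T3 = v3 ^+ 3 * v4 ^+ 2 * Dc 0 1 2.
Proof.
  rewrite det3 /T3 !mxE !inordK //= /Dc /det3e /ent /=. ring.
Qed.

Lemma affeq3 (hA : forall i j, A i j <> 0) : v3 != 0 -> v4 != 0 -> AffEq (G p A) N3.
Proof.
  move=> h3 h4.
  have hu : T3 \in unitmx.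
    rewrite unitmxE unitfE detT3 !mulf_neq0 ?expf_neq0 //.
    by rewrite -oppr_eq0; exact: h4.
  have h4' : - v4 != 0 by rewrite oppr_eq0.
  apply: (@AffEq_of _ _ _ _ T3 (invmx T3) c3 U3 (diag2 v3^-1 (- v4)^-1) e3).
  - exact: mulVmx.
  - exact: mulmxV.
  - exact: diag2_mul.
  - exact: diag2_mul'.
  - exact: main3.
Qed.

End L3.

Definition Sel {l} (r : 'I_4 -> 'I_l) : 'M[R]_(4, l) := \matrix_(k, i) ((i == r k)%:R).

Lemma Sel_mul l m (r : 'I_4 -> 'I_l) (K : 'M[R]_(l, m)) k j : (Sel r *m K) k j = K (r k) j.
Proof.
  rewrite mxE (bigD1 (r k)) //= big1 ?addr0.
  - by rewrite mxE eqxx mul1r.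
  - move=> i hi; by rewrite mxE (negbTE hi) mul0r.
Qed.

Lemma exT l (r : 'I_4 -> 'I_l) (Kp Kq : 'M[R]_(l, 4)) :
  Sel r *m Kp \in unitmx -> Sel r *m Kq \in unitmx ->
  exists T S : 'M[R]_l, S *m T = 1 /\ T *m S = 1 /\ T *m Kq = Kp.
Proof.
  move=> hp hq.
  set X := Sel r.
  have key : forall (K1 K2 : 'M[R]_(l, 4)), X *m K1 \in unitmx -> X *m K2 \in unitmx ->
     (1 + (K2 - K1) *m (invmx (X *m K1) *m X)) *m (1 + (K1 - K2) *m (invmx (X *m K2) *m X)) = 1.
    move=> K1 K2 h1 h2.
    set W := invmx (X *m K2). set W' := invmx (X *m K1).
    have e1 : W' *m (X *m K1) = 1 by exact: mulVmx.
    have e2 : (X *m K2) *m W = 1 by exact: mulmxV.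
    have k1 : W' *m (X *m ((K1 - K2) *m (W *m X))) = (W - W') *m X.
      rewrite !mulmxA mulmxBr mulmxBl -(mulmxA W' X K1) e1 mul1mx.
      by rewrite -(mulmxA W' X K2) -(mulmxA W' (X *m K2) W) e2 mulmx1.
    rewrite mulmxDl mul1mx mulmxDr mulmx1 -!mulmxA k1.
    rewrite -(opprB K1 K2) !mulNmx. set D := K1 - K2.
    rewrite (mulmxBl W W' X) mulmxBr.
    by rewrite opprB addKr addrK.
  exists (1 + (Kp - Kq) *m (invmx (X *m Kq) *m X)), (1 + (Kq - Kp) *m (invmx (X *m Kp) *m X)).
  split; [exact: key|split; [exact: key|]].
  rewrite mulmxDl mul1mx -!mulmxA mulVmx // mulmx1. by rewrite addrC subrK.
Qed.

Lemma affeq4 l (r : 'I_4 -> 'I_l) p q A B :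
  Sel r *m Kmat p A \in unitmx -> Sel r *m Kmat q B \in unitmx -> AffEq (G p A) (G q B).
Proof.
  move=> hp hq. have [T [S [h1 [h2 h3]]]] := @exT _ _ _ _ hp hq.
  exists T, S, (cst p A - T *m cst q B), 1, 1, 0.
  split; first exact: h1. split; first exact: h2. split; first exact: mulmx1. split; first exact: mulmx1.
  move=> x. rewrite aff_id !G_mat /aff vc_uv. congr uv.
  by rewrite mulmxDr mulmxA h3 addrCA subrK.
Qed.

Lemma PolyF_selK l (r : 'I_4 -> 'I_l) A : PolyF (fun p => \det (Sel r *m Kmat p A)).
Proof.
  apply: PolyF_det => i j. apply: (@PolyF_ext _ (fun p => Kmat p A (r i) j)).
    by move=> p; rewrite Sel_mul.
  exact: PolyF_Kmat.
Qed.

Definition rowsel {l} (r0 r1 r2 r3 : 'I_l) : 'I_4 -> 'I_l := fun k => nth r0 [:: r0; r1; r2; r3] k.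
Definition wit {l} (s0 s1 : 'I_l) : Idx l -> Vec 2 := fun i j =>
  if toI i == s0 then (if (proj1_sig j == 0)%N then 1 else 0)
  else if toI i == s1 then (if (proj1_sig j == 1)%N then 1 else 0) else 0.

Lemma selK_matrix l (r : 'I_4 -> 'I_l) (K : 'M[R]_(l, 4)) :
  Sel r *m K = \matrix_(i < 4, j < 4) K (r (inord i)) (inord j).
Proof. apply/matrixP => i j; by rewrite Sel_mul mxE !inord_val. Qed.

Lemma wit1 l (r0 r1 r2 r3 : 'I_l) (A : Idx l -> Idx 2 -> R) :
  [&& r0 != r2, r0 != r3, r1 != r2, r1 != r3 & r3 != r2] ->
  \det (Sel (rowsel r0 r1 r2 r3) *m Kmat (wit r2 r3) A) =
  4 * A (ofI r2) j0 * A (ofI r3) j1 * (A (ofI r0) j0 * A (ofI r1) j1 - A (ofI r0) j1 * A (ofI r1) j0).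
Proof.
  case/and5P => h02 h03 h12 h13 h32.
  rewrite selK_matrix (det4f (fun a b => _ (_ (inord a)) (inord b))) /det4e /det3e /bump /= /Kmat !mxE /rowsel !inordK //= /kent /wit /= !toI_ofI.
  rewrite !eqxx ?(negbTE h02) ?(negbTE h03) ?(negbTE h12) ?(negbTE h13) ?(negbTE h32) /=.
  normR. ring.
Qed.

Lemma wit2 l (r0 r1 r2 r3 : 'I_l) (A : Idx l -> Idx 2 -> R) :
  [&& r0 != r1, r0 != r3, r2 != r1, r2 != r3 & r3 != r1] ->
  \det (Sel (rowsel r0 r1 r2 r3) *m Kmat (wit r1 r3) A) =
  - (4 * A (ofI r1) j0 * A (ofI r3) j1 * (A (ofI r0) j0 * A (ofI r2) j1 - A (ofI r0) j1 * A (ofI r2) j0)).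
Proof.
  case/and5P => h01 h03 h21 h23 h31.
  rewrite selK_matrix (det4f (fun a b => _ (_ (inord a)) (inord b))) /det4e /det3e /bump /= /Kmat !mxE /rowsel !inordK //= /kent /wit /= !toI_ofI.
  rewrite !eqxx ?(negbTE h01) ?(negbTE h03) ?(negbTE h21) ?(negbTE h23) ?(negbTE h31) /=.
  normR. ring.
Qed.

Lemma PolyF_kent l (A : Idx l -> Idx 2 -> R) i k : PolyF (fun p => kent p A i k).
Proof.
  case: k => [|[|[|[|k]]]]; rewrite /kent /=.
  - exact: PolyF_const.
  - exact: PolyF_const.
  - apply: PolyF_mul; [exact: PolyF_const|exact: PolyF_var].
  - apply: PolyF_mul; [exact: PolyF_const|exact: PolyF_var].
  - exact: PolyF_const.
Qed.

Lemma PolyF_v34 (A : Idx 3 -> Idx 2 -> R) : PolyF (fun p => v3 p A * v4 p A).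
Proof.
  rewrite /v3 /v4 /Dc /det3e /ent /=.
  repeat first [apply: PolyF_mul | apply: PolyF_sub | apply: PolyF_add | apply: PolyF_opp | apply: PolyF_var | apply: PolyF_const].

Qed.

Definition wit3 (r : 'I_3) : Idx 3 -> Vec 2 := fun i j => if toI i == r then 1 else 0.

Lemma inord3_eq a b : (a < 3)%N -> (b < 3)%N -> (inord a == inord b :> 'I_3) = (a == b).
Proof. move=> ha hb; by rewrite -val_eqE /= !inordK. Qed.

Lemma w3a (A : Idx 3 -> Idx 2 -> R) :
  let a i := A (ofI (inord i : 'I_3)) j0 in let b i := A (ofI (inord i : 'I_3)) j1 in
  v3 (wit3 (inord 2)) A = -2 * b 2%N * (a 0%N * b 1%N - b 0%N * a 1%N) /\
  v4 (wit3 (inord 2)) A = 2 * a 2%N * (a 0%N * b 1%N - b 0%N * a 1%N).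
Proof.
  rewrite /v3 /v4 /Dc /det3e /ent /kent /wit3 /= !toI_ofI !inord3_eq //=.
  normR. split; ring.
Qed.
Lemma w3b (A : Idx 3 -> Idx 2 -> R) :
  let a i := A (ofI (inord i : 'I_3)) j0 in let b i := A (ofI (inord i : 'I_3)) j1 in
  v3 (wit3 (inord 1)) A = 2 * b 1%N * (a 0%N * b 2%N - b 0%N * a 2%N) /\
  v4 (wit3 (inord 1)) A = - 2 * a 1%N * (a 0%N * b 2%N - b 0%N * a 2%N).
Proof.
  rewrite /v3 /v4 /Dc /det3e /ent /kent /wit3 /= !toI_ofI !inord3_eq //=.
  normR. split; ring.
Qed.

Lemma neq_of_R (x : R) : (x <> 0)%R -> x != 0.
Proof. by move=> h; apply/eqP. Qed.

Lemma proper3 (A : Idx 3 -> Idx 2 -> R) (hA : forall i j, A i j <> 0%R) (rA : rank2 A) :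
  proper_algebraic_subset (fun p => v3 p A * v4 p A = 0).
Proof.
  split; first exact: (@PolyF_algebraic _ _ (PolyF_v34 A)).
  have [i hi] := @rank2_row _ _ (ofI (inord 0 : 'I_3)) hA rA.
  have hi' := @neq_of_R _ hi.
  rewrite -(ofI_toI _ i) in hi'.
  case E: (toI i) hi' => [[|[|[|m]]] Hm] // hi'.
  - exfalso; move: hi'; rewrite (_ : Ordinal Hm = inord 0); last by apply: val_inj; rewrite /= inordK.
    move/eqP; apply; normR; ring.
  - rewrite (_ : Ordinal Hm = inord 1) in hi'; last by apply: val_inj; rewrite /= inordK.
    exists (wit3 (inord 2)). have [-> ->] := w3a A.
    apply/eqP; rewrite !mulf_neq0 //; try (apply/eqP; apply: hA).
    by rewrite oppr_eq0 pnatr_eq0.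
    by rewrite pnatr_eq0.
  - rewrite (_ : Ordinal Hm = inord 2) in hi'; last by apply: val_inj; rewrite /= inordK.
    exists (wit3 (inord 1)). have [-> ->] := w3b A.
    apply/eqP; rewrite !mulf_neq0 //; try (apply/eqP; apply: hA).
    by rewrite pnatr_eq0.
    by rewrite oppr_eq0 pnatr_eq0.
Qed.

Lemma case3 (A B : Idx 3 -> Idx 2 -> R)
  (hA : forall i j, A i j <> 0%R) (hB : forall i j, B i j <> 0%R)
  (rA : rank2 A) (rB : rank2 B) :
  exists SA SB : (Idx 3 -> Vec 2) -> Prop,
    proper_algebraic_subset SA /\ proper_algebraic_subset SB /\
    forall p q : Idx 3 -> Vec 2, ~ SA p -> ~ SB q ->
      A_equivalent (G p A) (G q B).
Proof.
  exists (fun p => v3 p A * v4 p A = 0), (fun q => v3 q B * v4 q B = 0).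
  split; first exact: proper3. split; first exact: proper3.
  move=> p q hp hq. apply: AffEq_A.
  have hp3 : v3 p A != 0 by apply/eqP => E; apply: hp; rewrite E mul0r.
  have hp4 : v4 p A != 0 by apply/eqP => E; apply: hp; rewrite E mulr0.
  have hq3 : v3 q B != 0 by apply/eqP => E; apply: hq; rewrite E mul0r.
  have hq4 : v4 q B != 0 by apply/eqP => E; apply: hq; rewrite E mulr0.
  exact: (@AffEq_trans _ _ _ _ _ (affeq3 p A hA hp3 hp4) (@AffEq_sym _ _ _ _ (affeq3 q B hB hq3 hq4))).
Qed.

Lemma fresh_ord l (hl : (4 <= l)%N) (u v w : 'I_l) : exists y : 'I_l, [&& y != u, y != v & y != w].
Proof.
  have [k [hk [hu [hv hw]]]] := fresh_nat u v w.
  have hkl : (k < l)%N by move/ltP: hk => hk; lia.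
  exists (Ordinal hkl).
  by apply/and3P; split; apply/eqP => /(congr1 val) /= E; [apply: hu|apply: hv|apply: hw].
Qed.

Lemma finish4 l (r : 'I_4 -> 'I_l) (A B : Idx l -> Idx 2 -> R) (pA pB : Idx l -> Vec 2) :
  \det (Sel r *m Kmat pA A) != 0 -> \det (Sel r *m Kmat pB B) != 0 ->
  exists SA SB : (Idx l -> Vec 2) -> Prop,
    proper_algebraic_subset SA /\ proper_algebraic_subset SB /\
    forall p q : Idx l -> Vec 2, ~ SA p -> ~ SB q ->
      A_equivalent (G p A) (G q B).
Proof.
  move=> hpA hpB.
  exists (fun p => \det (Sel r *m Kmat p A) = 0), (fun q => \det (Sel r *m Kmat q B) = 0).
  split; [split; [exact: (@PolyF_algebraic _ _ (@PolyF_selK _ r A)) | by exists pA; apply/eqP]|].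
  split; [split; [exact: (@PolyF_algebraic _ _ (@PolyF_selK _ r B)) | by exists pB; apply/eqP]|].
  move=> p q hp hq. apply: AffEq_A. apply: (@affeq4 _ r); rewrite unitmxE unitfE; by apply/eqP.
Qed.

Ltac dist := apply/and5P; split; (done || (rewrite eq_sym; done)).

Lemma case4 (l : nat) (hl : (4 <= l)%N)
  (A B : Idx l -> Idx 2 -> R)
  (hA : forall i j, A i j <> 0%R) (hB : forall i j, B i j <> 0%R)
  (rA : rank2 A) (rB : rank2 B) :
  exists SA SB : (Idx l -> Vec 2) -> Prop,
    proper_algebraic_subset SA /\ proper_algebraic_subset SB /\
    forall p q : Idx l -> Vec 2, ~ SA p -> ~ SB q ->
      A_equivalent (G p A) (G q B).
Proof.
  have l0 : (0 < l)%N by lia.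
  pose i0 : 'I_l := Ordinal l0.
  have [iA hiA] := @rank2_row _ _ (ofI i0) hA rA.
  have [iB hiB] := @rank2_row _ _ (ofI i0) hB rB.
  pose a := toI iA. pose b := toI iB.
  have hiA' : A (ofI i0) j0 * A (ofI a) j1 - A (ofI i0) j1 * A (ofI a) j0 != 0.
    by rewrite /a ofI_toI; apply/eqP.
  have hiB' : B (ofI i0) j0 * B (ofI b) j1 - B (ofI i0) j1 * B (ofI b) j0 != 0.
    by rewrite /b ofI_toI; apply/eqP.
  have ha0 : a != i0.
    apply/eqP => E; move: hiA'; rewrite E; move/eqP; apply; ring.
  have hb0 : b != i0.
    apply/eqP => E; move: hiB'; rewrite E; move/eqP; apply; ring.
  have nzA : forall i j, A i j != 0 by move=> i j; apply/eqP; apply: hA.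
  have nzB : forall i j, B i j != 0 by move=> i j; apply/eqP; apply: hB.
  have n4 : 4 != 0 :> R by rewrite pnatr_eq0.
  case: (eqVneq a b) => [Eab|Nab].
  - have [x /and3P [hx1 hx2 _]] := @fresh_ord _ hl i0 a a.
    have [y /and3P [hy1 hy2 hy3]] := @fresh_ord _ hl i0 a x.
    apply: (@finish4 _ (rowsel i0 a x y) A B (wit x y) (wit x y)).
    + rewrite wit1; last by dist.
      by rewrite !mulf_neq0.
    + rewrite wit1; last by dist.
      by rewrite !mulf_neq0 // Eab.
  - have [y /and3P [hy1 hy2 hy3]] := @fresh_ord _ hl i0 a b.
    apply: (@finish4 _ (rowsel i0 a b y) A B (wit b y) (wit a y)).
    + rewrite wit1; last by dist.
      by rewrite !mulf_neq0.
    + rewrite wit2; last by dist.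
      by rewrite oppr_eq0 !mulf_neq0.
Qed.

Local Close Scope ring_scope.
Open Scope R_scope.

Theorem corollary2p1 (l : nat) (hl : Peano.le 3 l)
  (A B : Idx l -> Idx 2 -> R)
  (hA : forall i j, A i j <> 0) (hB : forall i j, B i j <> 0)
  (rA : rank2 A) (rB : rank2 B) :
  exists SA SB : (Idx l -> Vec 2) -> Prop,
    proper_algebraic_subset SA /\ proper_algebraic_subset SB /\
    forall p q : Idx l -> Vec 2, ~ SA p -> ~ SB q ->
      A_equivalent (G p A) (G q B).
Proof.
  have [El|hl4] : l = 3%nat \/ (4 <= l)%N by move/leP: hl; lia.
  - subst l. exact: case3.
  - exact: case4.
Qed.
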